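(* $\mathbb{F}(V)^P=\mathbb{F}(a_0,\beta,\Delta)$.
   Context: Let $p>2$ be a prime, $q=p^n$, and $\mathbb{F}$ a field of characteristic $p$ containing $\mathbb{F}_q$. Let $\mathbb{F}(V)=\mathbb{F}(a_0,a_1,a_2)$. For $c\in\mathbb{F}_q$ let $\sigma_c$ act on $\mathbb{F}(a_0,a_1,a_2)$ by the field automorphism $a_2\mapsto a_2+2ca_1+c^2a_0$, $a_1\mapsto a_1+ca_0$, $a_0\mapsto a_0$, and let $P=\{\sigma_c:c\in\mathbb{F}_q\}$ (a group isomorphic to $(\mathbb{F}_q,+)$, the upper unitriangular matrices in $SL_2(\mathbb{F}_q)$). $\mathbb{F}(V)^P$ is the field of $P$-invariant rational functions. Define $\Delta=a_1^2-a_0a_2$ and $\beta=\prod_{c\in\mathbb{F}_q}(a_1+ca_0)$. *)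

(* Defs.v *)
From HB Require Import structures.
From mathcomp Require Import all_boot all_order all_algebra all_field.
From mathcomp Require Import fraction.
From mathcomp.multinomials Require Import mpoly.
Set Implicit Arguments. Unset Strict Implicit. Unset Printing Implicit Defensive.
Import GRing.Theory.
Local Open Scope ring_scope.

(* F(V) = {fraction {mpoly F[3]}}, with a0,a1,a2 = 'X_0,'X_1,'X_2. *)

Section Vars.
Variable F : fieldType.
Definition a0 : {mpoly F[3]} := 'X_(@inord 2 0).
Definition a1 : {mpoly F[3]} := 'X_(@inord 2 1).
Definition a2 : {mpoly F[3]} := 'X_(@inord 2 2).

Definition Delta : {mpoly F[3]} := a1 ^+ 2 - a0 * a2.

Definition sigma_poly (c : F) (p : {mpoly F[3]}) : {mpoly F[3]} :=
  comp_mpoly [tuple a0; a1 + c%:MP * a0;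
                    a2 + (2 * c)%:MP * a1 + (c ^+ 2)%:MP * a0] p.

Definition sigma (c : F) (x : {fraction {mpoly F[3]}}) : {fraction {mpoly F[3]}} :=
  let r := repr x in
  (tofrac (sigma_poly c (frac r).1)) / (tofrac (sigma_poly c (frac r).2)).

Definition in_gen_field (b0 b1 b2 : {mpoly F[3]}) (x : {fraction {mpoly F[3]}}) :=
  exists f g : {mpoly F[3]},
    comp_mpoly [tuple b0; b1; b2] g != 0 /\
    x = tofrac (comp_mpoly [tuple b0; b1; b2] f) /
        tofrac (comp_mpoly [tuple b0; b1; b2] g).
End Vars.

(* beta = prod_{c in F_q} (a1 + c a0), with F_q embedded in F via iota *)
Definition beta (K : finFieldType) (F : fieldType) (iota : {rmorphism K -> F})
  : {mpoly F[3]} := \prod_(c : K) (a1 F + (iota c)%:MP * a0 F).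

(* Main.v *)
Require Import Defs.
From HB Require Import structures.
From mathcomp Require Import all_boot all_order all_algebra all_field.
From mathcomp Require Import fraction generic_quotient.
From mathcomp.multinomials Require Import mpoly.
From mathcomp Require Import ring.
Import GRing.Theory.
Local Open Scope ring_scope.
Lemma mmap_ext n (R S : ringType) (f1 f2 : R -> S) (h1 h2 : 'I_n -> S) p :
  f1 =1 f2 -> h1 =1 h2 -> mmap f1 h1 p = mmap f2 h2 p.
Proof.
move=> ef eh; rewrite /mmap; apply: eq_bigr => m _; rewrite ef; congr (_ * _).
by rewrite /mmap1; apply: eq_bigr => i _; rewrite eh.
Qed.

Lemma mmap_morph n (R S T : ringType) (f : R -> S) (h : 'I_n -> S) (g : S -> T) p :
  g 0 = 0 -> {morph g : x y / x + y} -> {morph g : x y / x * y} -> g 1 = 1 ->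
  g (mmap f h p) = mmap (g \o f) (g \o h) p.
Proof.
move=> g0 gD gM g1; rewrite /mmap (big_morph g gD g0); apply: eq_bigr => m _.
rewrite gM /mmap1 (big_morph g gM g1); congr (_ * _); apply: eq_bigr => i _ /=.
elim: (m i) => [|k IH]; first by rewrite !expr0.
by rewrite !exprS gM IH.
Qed.

Lemma ord3 (i : 'I_3) : i = inord 0 \/ i = inord 1 \/ i = inord 2.
Proof.
case: i => [[|[|[|k]]] Hk].
- by left; apply: val_inj; rewrite /= inordK.
- by right; left; apply: val_inj; rewrite /= inordK.
- by right; right; apply: val_inj; rewrite /= inordK.
- by [].
Qed.

Lemma tnth3_0 (T : Type) (u0 u1 u2 : T) : tnth [tuple u0; u1; u2] (inord 0) = u0.
Proof. by rewrite (tnth_nth u0) inordK. Qed.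
Lemma tnth3_1 (T : Type) (u0 u1 u2 : T) : tnth [tuple u0; u1; u2] (inord 1) = u1.
Proof. by rewrite (tnth_nth u0) inordK. Qed.
Lemma tnth3_2 (T : Type) (u0 u1 u2 : T) : tnth [tuple u0; u1; u2] (inord 2) = u2.
Proof. by rewrite (tnth_nth u0) inordK. Qed.

Section Main1.
Variable F : fieldType.
Local Notation R := {mpoly F[3]}.

Lemma comp3_comp (t : 3.-tuple R) (u0 u1 u2 : R) p :
  comp_mpoly t (comp_mpoly [tuple u0; u1; u2] p) =
  comp_mpoly [tuple comp_mpoly t u0; comp_mpoly t u1; comp_mpoly t u2] p.
Proof.
rewrite {1 2}/comp_mpoly [LHS](@mmap_morph _ _ _ _ _ _ (comp_mpoly t)) ?rmorph0 ?rmorph1 //;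
  last by move=> x y; rewrite rmorphM.
  apply: mmap_ext => [c|i] /=; first by rewrite comp_mpolyC.
  by case: (ord3 i) => [->|[->|->]]; rewrite !(tnth3_0, tnth3_1, tnth3_2).
by move=> x y; rewrite rmorphD.
Qed.

Lemma comp3_X0 (u0 u1 u2 : R) : comp_mpoly [tuple u0; u1; u2] (a0 F) = u0.
Proof. by rewrite /a0 comp_mpolyXU -tnth_nth tnth3_0. Qed.
Lemma comp3_X1 (u0 u1 u2 : R) : comp_mpoly [tuple u0; u1; u2] (a1 F) = u1.
Proof. by rewrite /a1 comp_mpolyXU -tnth_nth tnth3_1. Qed.
Lemma comp3_X2 (u0 u1 u2 : R) : comp_mpoly [tuple u0; u1; u2] (a2 F) = u2.
Proof. by rewrite /a2 comp_mpolyXU -tnth_nth tnth3_2. Qed.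

Lemma comp3_id p : comp_mpoly [tuple a0 F; a1 F; a2 F] p = p.
Proof.
rewrite -[RHS]comp_mpoly_id /comp_mpoly; apply: mmap_ext => // i.
rewrite tnth_map tnth_ord_tuple.
by case: (ord3 i) => [->|[->|->]]; rewrite !(tnth3_0, tnth3_1, tnth3_2).
Qed.

End Main1.
Section Frac.
Variable R : idomainType.
Lemma pi_ratio (r : {ratio R}) :
  (\pi_({fraction R}) r)%qT = tofrac r.1 / tofrac r.2.
Proof.
have dn := denom_ratioP r.
apply/(@mulIf _ (tofrac r.2)); first by rewrite tofrac_eq0.
rewrite divfK ?tofrac_eq0 //.
unlock tofrac.
have -> : forall a b : {ratio R}, (\pi_({fraction R}) a)%qT * (\pi_({fraction R}) b)%qT =
     (\pi_({fraction R}) (FracField.mulf a b))%qT by move=> a b; rewrite FracField.pi_mul.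
apply/eqmodP; rewrite /= FracField.equivfE /FracField.mulf /=.
rewrite !numden_Ratio ?oner_neq0 ?mulf_neq0 ?oner_neq0 //.
by rewrite !mulr1 mulrC.
Qed.

Lemma frac_repr (x : {fraction R}) :
  x = tofrac (frac (repr x)).1 / tofrac (frac (repr x)).2.
Proof. by rewrite -pi_ratio reprK. Qed.
End Frac.
Section Sig.
Variable F : fieldType.
Local Notation R := {mpoly F[3]}.
Local Notation A0 := (a0 F).
Local Notation A1 := (a1 F).
Local Notation A2 := (a2 F).
Implicit Types (c d k : F) (p u v : R).

Lemma sigma_rmorph c : {morph sigma_poly c : x y / x * y} /\ {morph sigma_poly c : x y / x + y}.
Proof. by split=> x y; rewrite /sigma_poly ?rmorphM ?rmorphD. Qed.

Lemma sigmaA0 c : sigma_poly c A0 = A0. Proof. exact: comp3_X0. Qed.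
Lemma sigmaA1 c : sigma_poly c A1 = A1 + c%:MP * A0. Proof. exact: comp3_X1. Qed.
Lemma sigmaA2 c : sigma_poly c A2 = A2 + (2 * c)%:MP * A1 + (c ^+ 2)%:MP * A0.
Proof. exact: comp3_X2. Qed.
Lemma sigmaC c k : sigma_poly c k%:MP = k%:MP. Proof. exact: comp_mpolyC. Qed.

Lemma sigma_comp c d p : sigma_poly c (sigma_poly d p) = sigma_poly (c + d) p.
Proof.
rewrite {1}/sigma_poly /sigma_poly comp3_comp.
set t := [tuple A0; A1 + c%:MP * A0; _].
have e0 : comp_mpoly t A0 = A0 by rewrite /t comp3_X0.
have e1 : comp_mpoly t A1 = A1 + c%:MP * A0 by rewrite /t comp3_X1.
have e2 : comp_mpoly t A2 = A2 + (2 * c)%:MP * A1 + (c ^+ 2)%:MP * A0 by rewrite /t comp3_X2.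
have -> : comp_mpoly t (A1 + d%:MP * A0) = A1 + (c + d)%:MP * A0.
  by rewrite rmorphD rmorphM /= comp_mpolyC e0 e1 rmorphD /=; ring.
have -> : comp_mpoly t (A2 + (2 * d)%:MP * A1 + (d ^+ 2)%:MP * A0) =
   A2 + (2 * (c + d))%:MP * A1 + ((c + d) ^+ 2)%:MP * A0.
  rewrite !rmorphD !rmorphM /= !comp_mpolyC e0 e1 e2.
  by rewrite !rmorphD !rmorphM /= ?rmorph_nat ?rmorph1; ring.
by rewrite e0.
Qed.

Lemma sigma0 p : sigma_poly 0 p = p.
Proof.
rewrite /sigma_poly !(mulr0, expr0n, rmorph0, mul0r, addr0) /=.
exact: comp3_id.
Qed.

Lemma sigma_inj c : injective (sigma_poly c).
Proof.
apply: (can_inj (g := sigma_poly (- c))) => p.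
by rewrite sigma_comp addNr sigma0.
Qed.

Lemma sigma_eq0 c p : (sigma_poly c p == 0) = (p == 0).
Proof.
apply/eqP/eqP => [h|->]; last by rewrite /sigma_poly rmorph0.
by apply: (@sigma_inj c); rewrite h /sigma_poly rmorph0.
Qed.

Lemma sigma_frac c u v : v != 0 ->
  sigma c (tofrac u / tofrac v) = tofrac (sigma_poly c u) / tofrac (sigma_poly c v).
Proof.
move=> v0; rewrite /sigma.
set r := repr _.
have d0 := denom_ratioP r.
have e : tofrac (frac r).1 / tofrac (frac r).2 = tofrac u / tofrac v.
  by rewrite -frac_repr.
move/eqP: e; rewrite eqr_div ?tofrac_eq0 // -!rmorphM /= tofrac_eq => /eqP e.
apply/eqP; rewrite eqr_div ?tofrac_eq0 ?sigma_eq0 // -!rmorphM /= tofrac_eq.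
by apply/eqP; congr comp_mpoly; exact: e.
Qed.

Lemma sigma_frac_inv c x : x = sigma c x -> forall u v, v != 0 -> x = tofrac u / tofrac v ->
   tofrac (sigma_poly c u) / tofrac (sigma_poly c v) = x.
Proof. by move=> h u v v0 ex; rewrite h ex sigma_frac. Qed.

End Sig.
Section Inv.
Variables (K : finFieldType) (F : fieldType) (iota : {rmorphism K -> F}).
Local Notation R := {mpoly F[3]}.
Local Notation A0 := (a0 F).
Local Notation A1 := (a1 F).
Local Notation A2 := (a2 F).
Local Notation B := (beta iota).
Local Notation D := (Delta F).

Lemma sigmaDelta (c : F) : sigma_poly c D = D.
Proof.
rewrite /Delta /sigma_poly; set t := [tuple _; _; _].
rewrite rmorphB !rmorphM /= /t comp3_X0 comp3_X1 comp3_X2.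
by rewrite !rmorphM ?rmorph_nat ?rmorph1 /= ?rmorphXn; ring.
Qed.

Lemma sigma_beta (c : K) : sigma_poly (iota c) B = B.
Proof.
rewrite /beta /sigma_poly; set t := [tuple _; _; _]; rewrite rmorph_prod /=.
rewrite [RHS](reindex_inj (addrI c)) /=; apply: eq_bigr => d _.
rewrite rmorphD rmorphM /= comp_mpolyC /t comp3_X0 comp3_X1 !rmorphD /=; ring.
Qed.

Lemma sigma_phi (c : K) f :
  sigma_poly (iota c) (comp_mpoly [tuple A0; B; D] f) = comp_mpoly [tuple A0; B; D] f.
Proof.
have h : forall u, comp_mpoly [tuple A0; A1 + (iota c)%:MP * A0;
   A2 + (2 * iota c)%:MP * A1 + (iota c ^+ 2)%:MP * A0] u = sigma_poly (iota c) u by [].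
by rewrite {1}/sigma_poly comp3_comp !h sigmaA0 sigma_beta sigmaDelta.
Qed.

Lemma gen_inv x : in_gen_field A0 B D x -> forall c : K, sigma (iota c) x = x.
Proof.
case=> f [g [g0 ->]] c.
by rewrite sigma_frac // !sigma_phi.
Qed.
End Inv.
Section Core.
Variables (S : idomainType) (K : finFieldType) (t : K -> S).
Hypothesis tinj : injective t.
Hypothesis K2 : (1 < #|K|)%N.
Local Notation T c := ('X + (t c)%:P).
Local Notation U := (\prod_(c : K) ('X + (t c)%:P)).

Lemma U_monic : U \is monic.
Proof. by apply: monic_prod => c _; apply: monicXaddC. Qed.

Lemma size_U : size U = #|K|.+1.
Proof.
have -> : U = \prod_(c <- index_enum K) ('X - (- t c)%:P).
  by apply: eq_bigr => c _; rewrite polyCN opprK.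
by rewrite size_prod_XsubC cardT enumT.
Qed.

Lemma size_T c : size (T c) = 2.
Proof. by rewrite size_XaddC. Qed.

Hypothesis UT : forall c, U \Po T c = U.

Lemma core G : (forall c, G \Po T c = G) -> exists H, G = H \Po U.
Proof.
move: {2}(size G) (leqnn (size G)) => k; elim: k G => [|k IH] G sG inv.
  by exists 0; move: sG; rewrite size_poly_leq0 comp_poly0 => /eqP.
have ulc : lead_coef U \is a GRing.unit by rewrite (monicP U_monic) unitr1.
have U0 : U != 0 by apply: monic_neq0; apply: U_monic.
set G1 := G %/ U; set G0 := G %% U.
have hG : G = G1 * U + G0 := Pdiv.IdomainUnit.divp_eq ulc G.
have s0 : (size G0 < size U)%N by rewrite ltn_modp.
have inv01 : forall c, G1 \Po T c = G1 /\ G0 \Po T c = G0.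
  move=> c.
  have e : G = (G1 \Po T c) * U + (G0 \Po T c).
    by rewrite -{1}(inv c) {1}hG comp_polyD comp_polyM UT.
  have sz : (size (G0 \Po T c) < size U)%N by rewrite size_comp_poly2 ?size_T.
  have [e1 e2] := Pdiv.IdomainUnit.edivpP ulc e sz.
  by split.
set z := G0.[0].
have G0z : G0 = z%:P.
  apply/eqP; rewrite -subr_eq0; apply/negPn/negP => nz.
  set rs := [seq t c | c <- enum K].
  have hall : all (root (G0 - z%:P)) rs.
    apply/allP => y /mapP [c _ ->].
    rewrite rootE !hornerE /z.
    have := congr1 (fun P => P.[0]) (proj2 (inv01 c)).
    by rewrite /= horner_comp !hornerE => ->; rewrite subrr.
  have hu : uniq rs by rewrite map_inj_uniq ?enum_uniq.
  have := max_poly_roots nz hall hu.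
  rewrite size_map -cardE; apply/negP; rewrite -leqNgt.
  apply: leq_trans (size_polyD _ _) _; rewrite size_polyN geq_max.
  rewrite -ltnS -size_U s0 /= size_polyC.
  by case: (z != 0) => //=; apply: ltnW.
have sG1 : (size G1 <= k)%N.
  have [->|nz1] := eqVneq G1 0; first by rewrite size_poly0.
  move: sG; rewrite hG size_addl; last first.
    rewrite size_Mmonic ?U_monic // size_U /=.
    apply: leq_trans s0 _; rewrite size_U addnS /=.
    by rewrite (polySpred nz1) addSn ltnS leq_addl.
  rewrite size_Mmonic ?U_monic // size_U addnS /= => h.
  rewrite -ltnS; apply: leq_trans _ h.
  by rewrite -addn1 leq_add2l ltnW.
have [H1 eH1] := IH G1 sG1 (fun c => proj1 (inv01 c)).
exists (H1 * 'X + z%:P).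
by rewrite comp_polyD comp_polyM comp_polyX comp_polyC -eH1 -G0z.
Qed.
End Core.
Lemma mmapXU n (R : ringType) (S : comRingType) (f : {rmorphism R -> S}) (h : 'I_n -> S) i :
  mmap f h 'X_i = h i.
Proof. by rewrite mmapX mmap1U. Qed.

Section Pi.
Variable F : fieldType.
Local Notation R := {mpoly F[3]}.
Local Notation A0 := (a0 F).
Local Notation A1 := (a1 F).
Local Notation A2 := (a2 F).
Local Notation D := (Delta F).

Definition piF (p : R) : {poly R} :=
  mmap (polyC \o @mpolyC 3 F) (tnth [tuple A0%:P; 'X; A2%:P]) p.

Lemma piF_morph : piF 0 = 0 /\ {morph piF : x y / x + y} /\ {morph piF : x y / x * y} /\ piF 1 = 1.
Proof.
split; first by rewrite /piF rmorph0.
split; first by move=> x y; rewrite /piF rmorphD.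
split; first by move=> x y; rewrite /piF rmorphM.
by rewrite /piF rmorph1.
Qed.
Lemma piFC k : piF k%:MP = (k%:MP)%:P.
Proof. by rewrite /piF mmapC. Qed.
Lemma piFA0 : piF A0 = A0%:P. Proof. by rewrite /piF /a0 mmapXU tnth3_0. Qed.
Lemma piFA1 : piF A1 = 'X. Proof. by rewrite /piF /a1 mmapXU tnth3_1. Qed.
Lemma piFA2 : piF A2 = A2%:P. Proof. by rewrite /piF /a2 mmapXU tnth3_2. Qed.

Lemma piF_comp (t : 3.-tuple R) p :
  piF (comp_mpoly t p) = mmap (polyC \o @mpolyC 3 F) (fun i => piF (tnth t i)) p.
Proof.
have [p0 [pD [pM p1]]] := piF_morph.
rewrite /comp_mpoly (@mmap_morph _ _ _ _ _ _ piF _ p0 pD pM p1).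
by apply: mmap_ext => // k /=; rewrite piFC.
Qed.

Lemma piF_compp (T : {poly R}) p :
  piF p \Po T = mmap (polyC \o @mpolyC 3 F) (fun i => tnth [tuple A0%:P; 'X; A2%:P] i \Po T) p.
Proof.
rewrite /piF (@mmap_morph _ _ _ _ _ _ (comp_poly T)) ?comp_poly0 ?comp_polyC //;
  last by move=> x y; rewrite comp_polyM.
  by apply: mmap_ext => // k /=; rewrite comp_polyC.
by move=> x y; rewrite comp_polyD.
Qed.

Lemma piF_ev p : (piF p).[A1] = p.
Proof.
rewrite /piF (@mmap_morph _ _ _ _ _ _ (fun P : {poly R} => P.[A1])) ?hornerC //.
all: try (by move=> x y; rewrite hornerD).
all: try (by move=> x y; rewrite hornerM).
rewrite -[RHS]comp3_id /comp_mpoly; apply: mmap_ext => [k|i] /=; first by rewrite hornerC.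
by case: (ord3 i) => [->|[->|->]]; rewrite !(tnth3_0, tnth3_1, tnth3_2) ?hornerC ?hornerX.
Qed.

Local Notation zeta := (comp_mpoly [tuple A0; 0; A2]).

Lemma zeta_piF p : map_poly zeta (piF p) = piF p.
Proof.
rewrite /piF (@mmap_morph _ _ _ _ _ _ (map_poly zeta)) ?rmorph0 ?rmorph1 //.
all: try (by move=> x y; rewrite rmorphD).
all: try (by move=> x y; rewrite rmorphM).
apply: mmap_ext => [k|i] /=; first by rewrite map_polyC; congr polyC; exact: comp_mpolyC.
case: (ord3 i) => [->|[->|->]]; rewrite !(tnth3_0, tnth3_1, tnth3_2) ?map_polyX //;
  rewrite map_polyC; congr polyC; [exact: comp3_X0 | exact: comp3_X2].
Qed.

End Pi.
Section PhiInj.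
Variable F : fieldType.
Local Notation R := {mpoly F[3]}.
Local Notation A0 := (a0 F).
Local Notation A1 := (a1 F).
Local Notation A2 := (a2 F).
Local Notation D := (Delta F).

Lemma A0_neq0 : A0 != 0.
Proof.
apply/eqP => h; have := congr1 (fun p : R => p@_U_(@inord 2 0)) h.
by rewrite /a0 mcoeffX eqxx mcoeff0 => /eqP; rewrite oner_eq0.
Qed.

Local Notation evE := (mmap (@tofrac _ \o @mpolyC 3 F)
  (tnth [tuple tofrac A0; tofrac A1; (tofrac A1 ^+ 2 - tofrac A2) / tofrac A0])).

Lemma evE_Phi p : evE (comp_mpoly [tuple A0; A1; D] p) = tofrac p.
Proof.
rewrite -{2}[p]comp3_id /comp_mpoly.
rewrite (@mmap_morph _ _ _ _ _ _ evE) ?rmorph0 ?rmorph1 //.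
all: try (by move=> x y; rewrite rmorphD).
all: try (by move=> x y; rewrite rmorphM).
rewrite (@mmap_morph _ _ _ _ _ _ (@tofrac _)) ?rmorph0 ?rmorph1 //.
all: try (by move=> x y; rewrite rmorphD).
all: try (by move=> x y; rewrite rmorphM).
apply: mmap_ext => [k|i] /=; first by rewrite mmapC.
have a0n : tofrac A0 != 0 by rewrite tofrac_eq0 A0_neq0.
case: (ord3 i) => [->|[->|->]]; rewrite !(tnth3_0, tnth3_1, tnth3_2).
- by rewrite /a0 mmapXU tnth3_0.
- by rewrite /a1 mmapXU tnth3_1.
rewrite /Delta rmorphB !rmorphM /= /a0 /a1 /a2 !mmapXU.
rewrite !(tnth3_0, tnth3_1, tnth3_2).
set x0 := tofrac _ in a0n *; set x1 := tofrac _; set x2 := tofrac _.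
by rewrite [x0 * _]mulrC divfK // expr2 opprB addrC subrK.
Qed.

Lemma Phi_inj p : comp_mpoly [tuple A0; A1; D] p = 0 -> p = 0.
Proof.
move=> h; apply/eqP; rewrite -tofrac_eq0 -evE_Phi h.
by rewrite rmorph0.
Qed.
End PhiInj.
Section QCons.
Variable F : fieldType.
Local Notation R := {mpoly F[3]}.
Local Notation A0 := (a0 F).
Local Notation A1 := (a1 F).
Local Notation A2 := (a2 F).
Local Notation D := (Delta F).
Local Notation Phi := (comp_mpoly [tuple A0; A1; D]).

Definition Wp (P : R) := exists k Q, Phi Q = A0 ^+ k * P.

Lemma Wp_add P1 P2 : Wp P1 -> Wp P2 -> Wp (P1 + P2).
Proof.
move=> [k [Q1 e1]] [j [Q2 e2]]; exists (k + j)%N, (A0 ^+ j * Q1 + A0 ^+ k * Q2).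
by rewrite rmorphD !rmorphM !rmorphXn /= comp3_X0 e1 e2 exprD; ring.
Qed.

Lemma Wp_mul P1 P2 : Wp P1 -> Wp P2 -> Wp (P1 * P2).
Proof.
move=> [k [Q1 e1]] [j [Q2 e2]]; exists (k + j)%N, (Q1 * Q2).
by rewrite rmorphM /= e1 e2 exprD; ring.
Qed.

Lemma Wp_C c : Wp c%:MP.
Proof. by exists 0%N, c%:MP; rewrite comp_mpolyC expr0 mul1r. Qed.

Lemma Wp_exp P n : Wp P -> Wp (P ^+ n).
Proof.
move=> h; elim: n => [|n IH]; first by rewrite expr0 -mpolyC1; apply: Wp_C.
by rewrite exprS; apply: Wp_mul.
Qed.

Lemma Wp_X i : Wp 'X_i.
Proof.
case: (ord3 i) => [->|[->|->]].
- by exists 0%N, A0; rewrite comp3_X0 expr0 mul1r.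
- by exists 0%N, A1; rewrite comp3_X1 expr0 mul1r.
exists 1%N, (A1 ^+ 2 - A2).
rewrite rmorphB rmorphXn /= comp3_X1 comp3_X2 /Delta expr1 /a2; ring.
Qed.

Lemma Wp_all P : Wp P.
Proof.
rewrite [P]mpolyE; apply: (big_ind Wp).
- by rewrite -mpolyC0; apply: Wp_C.
- exact: Wp_add.
move=> m _; rewrite -mul_mpolyC; apply: Wp_mul; first exact: Wp_C.
rewrite mpolyXE_id; apply: (big_ind Wp).
- by rewrite -mpolyC1; apply: Wp_C.
- exact: Wp_mul.
by move=> i _; apply: Wp_exp; apply: Wp_X.
Qed.
End QCons.
Section MainPoly.
Variables (K : finFieldType) (F : fieldType) (iota : {rmorphism K -> F}).
Hypothesis K2 : (1 < #|K|)%N.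
Local Notation R := {mpoly F[3]}.
Local Notation A0 := (a0 F).
Local Notation A1 := (a1 F).
Local Notation A2 := (a2 F).
Local Notation D := (Delta F).
Local Notation B := (beta iota).
Local Notation Phi := (comp_mpoly [tuple A0; A1; D]).
Local Notation zeta := (comp_mpoly [tuple A0; 0; A2]).

Definition tK (c : K) : R := (iota c)%:MP * A0.

Lemma tK_inj : injective tK.
Proof.
move=> c d; rewrite /tK => /(mulIf (A0_neq0 F)) /eqP; rewrite mpolyC_eq => /eqP.
exact: fmorph_inj.
Qed.

Lemma tKD c d : tK (c + d) = tK c + tK d.
Proof. by rewrite /tK rmorphD rmorphD mulrDl. Qed.

Lemma UT c : (\prod_(d : K) ('X + (tK d)%:P)) \Po ('X + (tK c)%:P) =
   \prod_(d : K) ('X + (tK d)%:P).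
Proof.
rewrite rmorph_prod /= [RHS](reindex_inj (addrI c)) /=; apply: eq_bigr => d _.
by rewrite comp_polyD comp_polyX comp_polyC tKD polyCD addrA.
Qed.

Lemma main_poly P : (forall c : K, sigma_poly (iota c) P = P) ->
  exists k f, A0 ^+ k * P = comp_mpoly [tuple A0; B; D] f.
Proof.
move=> invP.
have [k [Q eQ]] := @Wp_all F P.
have tauQ : forall c, comp_mpoly [tuple A0; A1 + tK c; A2] Q = Q.
  move=> c; apply/eqP; rewrite -subr_eq0; apply/eqP; apply: (@Phi_inj F).
  rewrite rmorphB /=; apply/eqP; rewrite subr_eq0; apply/eqP.
  have h1 : Phi (A1 + tK c) = A1 + (iota c)%:MP * A0.
    by rewrite /tK rmorphD rmorphM /= comp_mpolyC comp3_X0 comp3_X1.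
  rewrite comp3_comp comp3_X0 comp3_X2 h1.
  have -> : comp_mpoly [tuple A0; A1 + (iota c)%:MP * A0; D] Q = sigma_poly (iota c) (Phi Q).
    have hD := @sigmaDelta F (iota c); rewrite /sigma_poly in hD.
    by rewrite /sigma_poly comp3_comp comp3_X0 comp3_X1 hD.
  rewrite eQ (proj1 (sigma_rmorph _ _)) invP.
  rewrite /sigma_poly rmorphXn /= comp3_X0 //.
set U := \prod_(d : K) ('X + (tK d)%:P).
have invG : forall c, piF F Q \Po ('X + (tK c)%:P) = piF F Q.
  move=> c; rewrite -{2}(tauQ c) (@piF_compp F) (@piF_comp F); apply: mmap_ext => // i.
  have [p0 [pD [pM p1]]] := piF_morph F.
  case: (ord3 i) => [->|[->|->]]; rewrite !(tnth3_0, tnth3_1, tnth3_2).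
  - by rewrite piFA0 comp_polyC.
  - by rewrite comp_polyX pD piFA1 /tK pM piFC piFA0 polyCM.
  - by rewrite piFA2 comp_polyC.
have [H eH] := @core R K tK tK_inj K2 UT (piF F Q) invG.
set H' := map_poly zeta H.
have eH' : piF F Q = H' \Po U.
  rewrite -(@zeta_piF F) eH map_comp_poly; congr (_ \Po _).
  rewrite /U rmorph_prod; apply: eq_bigr => d _.
  rewrite rmorphD /= map_polyX map_polyC /tK; congr (_ + _%:P).
  change (comp_mpoly [tuple A0; 0; A2] ((iota d)%:MP * A0) = (iota d)%:MP * A0).
  by rewrite rmorphM /= comp_mpolyC comp3_X0.
have UA1 : U.[A1] = B.
  by rewrite /U horner_prod; apply: eq_bigr => d _; rewrite hornerD hornerX hornerC.
have eQH : Q = H'.[B] by rewrite -{1}(@piF_ev F Q) eH' horner_comp UA1.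
exists k, (\sum_(i < size H') H'`_i * A1 ^+ i).
rewrite -eQ eQH.
have -> : H'.[B] = comp_mpoly [tuple A0; B; A2] (\sum_(i < size H') H'`_i * A1 ^+ i).
  rewrite horner_coef rmorph_sum; apply: eq_bigr => i _.
  rewrite rmorphM rmorphXn /= comp3_X1; congr (_ * _).
  rewrite /H' coef_map /= comp3_comp comp3_X0 comp3_X2 rmorph0 //.
rewrite comp3_comp comp3_X0 comp3_X2; congr (comp_mpoly [tuple _; _; _] _).
rewrite /beta rmorph_prod; apply: eq_bigr => d _.
by rewrite rmorphD rmorphM /= comp_mpolyC comp3_X0 comp3_X1.
Qed.
End MainPoly.
Lemma sigma_prod (F : fieldType) (I : finType) (c : F) (G : I -> {mpoly F[3]}) (P : pred I) :
  sigma_poly c (\prod_(i | P i) G i) = \prod_(i | P i) sigma_poly c (G i).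
Proof.
apply: (big_morph _ (proj1 (sigma_rmorph F c))).
by rewrite -mpolyC1 sigmaC.
Qed.

Theorem lemma2p3 (p n : nat) (K : finFieldType) (F : fieldType)
  (iota : {rmorphism K -> F}) :
  prime p -> (2 < p)%N -> (0 < n)%N -> #|K| = (p ^ n)%N ->
  forall x : {fraction {mpoly F[3]}},
    (forall c : K, sigma (iota c) x = x) <->
    in_gen_field (a0 F) (beta iota) (Delta F) x.
Proof.
move=> hpr hp2 hn hK x; split; last by move=> h c; apply: gen_inv.
move=> invx.
have K2 : (1 < #|K|)%N.
  rewrite hK; case: n hn {hK} => // n0 _; rewrite expnS.
  apply: (@leq_trans p); first exact: ltnW.
  by apply: leq_pmulr; rewrite expn_gt0 prime_gt0.
set r := repr x.
set N := (frac r).1; set Dn := (frac r).2.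
have Dn0 : Dn != 0 := denom_ratioP r.
have ex : x = tofrac N / tofrac Dn := @frac_repr _ x.
set Pi := \prod_(d | d != 0) sigma_poly (iota d) Dn.
have Pi0 : Pi != 0 by apply/prodf_neq0 => d _; rewrite (@sigma_eq0 F).
set D' := \prod_(d : K) sigma_poly (iota d) Dn.
have eD' : D' = Dn * Pi by rewrite /D' (bigD1 0) //= rmorph0 sigma0.
have D'0 : D' != 0 by rewrite eD' mulf_neq0.
set N' := N * Pi.
have ex' : x = tofrac N' / tofrac D'.
  rewrite ex eD'; apply/eqP; rewrite eqr_div ?tofrac_eq0 ?mulf_neq0 //.
  by rewrite -!rmorphM tofrac_eq /N'; apply/eqP; ring.
have invD : forall c : K, sigma_poly (iota c) D' = D'.
  move=> c; rewrite /D' sigma_prod [RHS](reindex_inj (addrI c)) /=.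
  by apply: eq_bigr => d _; rewrite sigma_comp rmorphD.
have invN : forall c : K, sigma_poly (iota c) N' = N'.
  move=> c; have := invx c; rewrite {1}ex' sigma_frac // invD.
  move/eqP; rewrite ex' eqr_div ?tofrac_eq0 // -!rmorphM tofrac_eq.
  by rewrite (inj_eq (mulIf D'0)) => /eqP.
have [k [f1 e1]] := @main_poly K F iota K2 _ invN.
have [j [f2 e2]] := @main_poly K F iota K2 _ invD.
exists (f1 * a0 F ^+ j), (f2 * a0 F ^+ k).
have phiA0 : comp_mpoly [tuple a0 F; beta iota; Delta F] (a0 F) = a0 F by rewrite comp3_X0.
rewrite !rmorphM !rmorphXn /= !phiA0 -e1 -e2.
have A00 := A0_neq0 F.
split; first by rewrite !mulf_neq0 // expf_neq0.
rewrite ex'; apply/eqP; rewrite eqr_div ?tofrac_eq0 ?mulf_neq0 ?expf_neq0 //.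
  rewrite -!rmorphXn -!rmorphM tofrac_eq; apply/eqP; ring.
all: by rewrite tofrac_eq0 ?mulf_neq0 ?expf_neq0.
Qed.
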